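(* Let $G$ be a symmetric connected graph of order $n\ge 3$ and let $g:A\to B$ be any function. Then $1\leq fix(G)+fix(F_G)\leq 3n-4$. Both bounds are sharp.
   Context: All graphs are simple, finite, nontrivial and connected. A set $S\subseteq V(H)$ is a fixing set of a graph $H$ if the only automorphism of $H$ fixing every vertex of $S$ is the identity; $fix(H)$ is the minimum cardinality of a fixing set of $H$. A connected graph $G$ is symmetric if $fix(G)\neq 0$ (i.e. $G$ has a nontrivial automorphism). Functigraph: let $G_1,G_2$ be disjoint copies of a connected graph $G$, with $A=V(G_1)$, $B=V(G_2)$, and let $g:A\to B$ be a function. The functigraph $F_G$ has vertex set $A\cup B$ and edge set $E(G_1)\cup E(G_2)\cup\{ug(u):u\in A\}$. *)

(* Defs.v *)
From HB Require Import structures.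
From mathcomp Require Import all_boot all_fingroup.
Set Implicit Arguments. Unset Strict Implicit. Unset Printing Implicit Defensive.

Definition simple_graph (T : finType) (e : rel T) : Prop :=
  symmetric e /\ irreflexive e.

Definition connected_graph (T : finType) (e : rel T) : Prop :=
  forall x y : T, connect e x y.

Definition is_autb (T : finType) (e : rel T) (s : {perm T}) : bool :=
  [forall x, [forall y, e (s x) (s y) == e x y]].

Definition fixing_set (T : finType) (e : rel T) (S : {set T}) : bool :=
  [forall s : {perm T}, (is_autb e s && [forall x in S, s x == x]) ==> (s == 1%g)].

(* fix(e) = minimum cardinality of a fixing set (the full vertex set is always
   fixing, so the default #|T| is never smaller than the true minimum) *)
Definition fixnum (T : finType) (e : rel T) : nat :=
  \big[minn/#|T|]_(S : {set T} | fixing_set e S) #|S|.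

(* Functigraph F_G: vertices inl x (copy A) and inr x (copy B). *)
Definition functigraph (T : finType) (e : rel T) (g : T -> T) : rel (T + T) :=
  fun u v =>
    match u, v with
    | inl x, inl y => e x y
    | inr x, inr y => e x y
    | inl x, inr y => g x == y
    | inr y, inl x => g x == y
    end.

Definition symmetric_graph (T : finType) (e : rel T) : Prop := fixnum e <> 0.

(* Main.v *)
Require Import Defs.
From HB Require Import structures.
From mathcomp Require Import all_boot all_fingroup.
From mathcomp Require Import zify.
Set Implicit Arguments. Unset Strict Implicit. Unset Printing Implicit Defensive.


Section Gen.
Variable T : finType.
Variable e : rel T.

Lemma autP (s : {perm T}) : reflect (forall x y, e (s x) (s y) = e x y) (is_autb e s).
Proof.
apply: (iffP forallP) => [H x y | H x].
  by move/forallP: (H x) => /(_ y) /eqP.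
by apply/forallP => y; rewrite H.
Qed.

Lemma fixingP (S : {set T}) :
  reflect (forall s : {perm T}, is_autb e s -> (forall x, x \in S -> s x = x) -> s = 1%g)
          (fixing_set e S).
Proof.
apply: (iffP forallP) => [H s As Fs | H s].
  move/implyP: (H s); rewrite As /= => /(_ _) /eqP; apply.
  by apply/forall_inP => x /Fs ->.
apply/implyP => /andP [As /forall_inP Fs]; apply/eqP/H => // x xS; exact/eqP/Fs.
Qed.

Lemma fixnum_le (S : {set T}) : fixing_set e S -> fixnum e <= #|S|.
Proof.
move=> FS; have : S \in index_enum _ by rewrite mem_index_enum.
rewrite /fixnum; elim: (index_enum _) => // x r IH; rewrite inE big_cons.
case/orP => [/eqP <-|/IH H]; first by rewrite FS geq_minl.
by case: ifP => _ //; rewrite geq_min H orbT.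
Qed.

Lemma fixnum_ge k : k <= #|T| -> (forall S, fixing_set e S -> k <= #|S|) -> k <= fixnum e.
Proof.
move=> H1 H2; rewrite /fixnum; apply: (big_ind (fun m => k <= m)) => //.
by move=> x y Hx Hy; rewrite leq_min Hx Hy.
Qed.

Lemma fixnum_allbut1 (t : T) : fixnum e <= #|T| - 1.
Proof.
have -> : #|T| - 1 = #|[set~ t]| by rewrite cardsC1 subn1.
apply: fixnum_le; apply/fixingP => s _ Fs; apply/permP => x; rewrite perm1.
have Ft : s t = t.
  case: (eqVneq (s t) t) => // Hne.
  have := Fs (s t); rewrite !inE Hne => /(_ isT) E.
  by move/perm_inj: E => E; rewrite E eqxx in Hne.
case: (eqVneq x t) => [->//|Hx]; apply: Fs; by rewrite !inE.
Qed.

Definition twin (u v : T) := forall w, w != u -> w != v -> e w u = e w v.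

Lemma twin_aut u v : symmetric e -> irreflexive e -> twin u v -> is_autb e (tperm u v).
Proof.
move=> Hs Hi Ht; apply/autP => x y.
have tw : forall w, w != u -> w != v -> e u w = e v w.
  by move=> w h1 h2; rewrite Hs (Hs v) Ht.
case: tpermP => [->|->|/eqP hx1 /eqP hx2]; case: tpermP => [->|->|/eqP hy1 /eqP hy2];
  rewrite ?Hi ?(Hs v u) //.
all: first [by rewrite tw | by rewrite Ht | by rewrite -tw | by rewrite -Ht].
Qed.

Lemma lower_classes k (c : T -> 'I_k) : symmetric e -> irreflexive e ->
  (forall u v, u != v -> c u = c v -> twin u v) -> #|T| - k <= fixnum e.
Proof.
move=> Hs Hi Hc; apply: fixnum_ge; first exact: leq_subr.
move=> S /fixingP FS.
have inj : {in ~: S &, injective c}.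
  move=> u v; rewrite !inE => Hu Hv Euv; apply/eqP; apply/negPn/negP => Hne.
  have E := FS _ (twin_aut Hs Hi (Hc _ _ Hne Euv)).
  have : tperm u v u = u.
    rewrite E ?perm1 // => x Hx; rewrite tpermD //; apply/eqP => Ex; subst x.
      by rewrite Hx in Hu.
    by rewrite Hx in Hv.
  by rewrite tpermL => /eqP; rewrite eq_sym (negbTE Hne).
have := card_in_imset inj.
have : #|c @: ~: S| <= k by apply: leq_trans (max_card _) _; rewrite card_ord.
have := cardsC S; lia.
Qed.

Definition dist (u v : T) := exists w, [/\ w != u, w != v & e w u != e w v].

Lemma distC u v : dist u v -> dist v u.
Proof. by case=> w [h1 h2 h3]; exists w; split => //; rewrite eq_sym. Qed.

Lemma in3P (x y z a : T) : a \in [set x; y; z] -> [\/ a = x, a = y | a = z].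
Proof. by rewrite !inE => /orP[/orP[]|]/eqP; [constructor 1|constructor 2|constructor 3]. Qed.

Lemma in3 (x y z a b c d : T) : a \in [set x; y; z] -> b \in [set x; y; z] ->
  c \in [set x; y; z] -> d \in [set x; y; z] -> a != b -> b != c -> a != c ->
  [\/ d = a, d = b | d = c].
Proof.
move=> /in3P[]-> /in3P[]-> /in3P[]-> /in3P[]->;
  rewrite ?eqxx //= => *; first [by constructor 1 | by constructor 2 | by constructor 3].
Qed.

Lemma three_fix x y z : symmetric e -> x != y -> y != z -> x != z ->
  dist x y -> dist y z -> dist x z -> fixnum e <= #|T| - 3.
Proof.
move=> Hs xy yz xz dxy dyz dxz.
set Tr := [set x; y; z].
have cTr : #|Tr| = 3.
  by rewrite /Tr setUC cardsU1 cards2 !inE negb_or (eq_sym z x) (eq_sym z y) xy xz yz.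
have -> : #|T| - 3 = #|~: Tr| by have := cardsC Tr; lia.
apply: fixnum_le; apply/fixingP => s As Fs.
have fixo : forall w, w \notin Tr -> s w = w by move=> w wT; apply: Fs; rewrite inE.
have imgTr : forall w, s w != w -> s w \in Tr.
  move=> w Hw; apply/negPn/negP => H; have := fixo _ H => /perm_inj E.
  by rewrite E eqxx in Hw.
have wTr : forall w, s w != w -> w \in Tr.
  move=> w Hw; apply/negPn/negP => H; by rewrite fixo ?eqxx in Hw.
have Dall : forall a b, a \in Tr -> b \in Tr -> a != b -> dist a b.
  move=> a b /in3P[]-> /in3P[]->; rewrite ?eqxx //= => _;
    by [|apply: distC].
apply/permP => u; rewrite perm1; case: (eqVneq (s u) u) => // Hu; exfalso.
have uT := wTr _ Hu; have vT := imgTr _ Hu.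
have uv : u != s u by rewrite eq_sym.
have tw : twin u (s u).
  move=> w wu wv; have wv' : s u != w by rewrite eq_sym.
  have wu' : u != w by rewrite eq_sym.
  case: (eqVneq (s w) w) => Hw.
    by rewrite -[in RHS]Hw (autP _ As).
  have wT := wTr _ Hw; have swT := imgTr _ Hw.
  have swv : s w != s u by apply: contra wu => /eqP/perm_inj ->.
  have sw : s w = u.
    by case: (in3 uT vT wT swT uv wv' wu') => // E; [rewrite E eqxx in swv | rewrite E eqxx in Hw].
  have Hv : s (s u) != s u by apply: contra uv => /eqP/perm_inj ->.
  have svT := imgTr _ Hv.
  have svu : s (s u) != u.
    apply/negP => /eqP E; have : s (s u) = s w by rewrite E sw.
    by move/perm_inj => E2; rewrite E2 eqxx in wv.
  have sv : s (s u) = w.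
    by case: (in3 uT vT wT svT uv wv' wu') => // E; [rewrite E eqxx in svu | rewrite E eqxx in Hv].
  by rewrite -(autP _ As w (s u)) sw sv Hs.
case: (Dall _ _ uT vT uv) => w [h1 h2 h3].
by rewrite tw ?eqxx in h3.
Qed.

Definition deg (v : T) := #|[set w | e v w]|.

Lemma deg_aut (s : {perm T}) v : is_autb e s -> deg (s v) = deg v.
Proof.
move=> As; rewrite /deg -(card_preimset _ (@perm_inj _ s)).
apply: eq_card => w; by rewrite !inE (autP _ As).
Qed.

Lemma prop_fix (s : {perm T}) u v : is_autb e s -> s u = u -> e u v ->
  (forall w, e u w -> [\/ w = v, s w = w | deg w != deg v]) -> s v = v.
Proof.
move=> As Hu Huv H.
have : e u (s v) by rewrite -{1}Hu (autP _ As).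
move/H => [->//| /perm_inj -> //| D].
by rewrite deg_aut ?eqxx in D.
Qed.

Lemma deg_le v (A : {set T}) : (forall w, e v w -> w \in A) -> deg v <= #|A|.
Proof. move=> H; apply: subset_leq_card; apply/subsetP => w; rewrite inE; exact: H. Qed.

Lemma deg_ge2 v a b : e v a -> e v b -> a != b -> 2 <= deg v.
Proof.
move=> ha hb ab; have : #|[set a; b]| = 2 by rewrite cards2 ab.
move=> <-; apply: subset_leq_card; apply/subsetP => w; rewrite !inE.
by case/orP => /eqP ->.
Qed.

Lemma deg_ge3 v a b c : e v a -> e v b -> e v c -> a != b -> b != c -> a != c -> 3 <= deg v.
Proof.
move=> ha hb hc ab bc ac; have : #|[set a; b; c]| = 3.
  by rewrite setUC cardsU1 cards2 !inE negb_or (eq_sym c a) (eq_sym c b) ab ac bc.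
move=> <-; apply: subset_leq_card; apply/subsetP => w /in3P[]->; by rewrite inE.
Qed.

End Gen.


Lemma neighbor (T : finType) (e : rel T) : irreflexive e -> connected_graph e -> 2 <= #|T| ->
  forall x, exists y, e x y.
Proof.
move=> Hi Hc H2 x.
have [y yx] : exists y, y != x.
  move: H2 => /card_gt1P [x0 [y0 [_ _ h]]].
  case: (eqVneq x0 x) => [E|]; last by exists x0.
  by exists y0; rewrite -E eq_sym.
case/connectP: (Hc x y) => [[|y0 p]] /=; first by move=> _ E; rewrite E eqxx in yx.
by case/andP => h _ _; exists y0.
Qed.

Lemma fg_sym (T : finType) (e : rel T) (g : T -> T) : symmetric e -> symmetric (functigraph e g).
Proof. by move=> Hs [x|x] [y|y] //=; rewrite Hs. Qed.

Lemma upperF (T : finType) (e : rel T) (g : T -> T) : simple_graph e -> connected_graph e ->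
  3 <= #|T| -> fixnum (functigraph e g) <= 2 * #|T| - 3.
Proof.
case=> Hs Hi Hc H3.
have : 0 < #|T| by lia.
case/card_gt0P => a _.
set b := g a.
have : 1 < #|[set~ b]| by rewrite cardsC1; lia.
case/card_gt1P => c1 [c2 [h1 h2 h12]]; rewrite !inE in h1 h2.
have [r ar] := neighbor Hi Hc (ltnW H3) a.
have ra : r != a by apply/eqP => E; rewrite E Hi in ar.
set c := if g r == c1 then c2 else c1.
have cb : c != b by rewrite /c; case: ifP.
have grc : g r != c by rewrite /c; case: ifP => [/eqP ->|/negbT] //; rewrite eq_sym.
have [q bq] := neighbor Hi Hc (ltnW H3) b.
have qb : q != b by apply/eqP => E; rewrite E Hi in bq.
have := @three_fix _ (functigraph e g) (inl a) (inr b) (inr c) (fg_sym g Hs).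
rewrite card_sum => H; suff: fixnum (functigraph e g) <= #|T| + #|T| - 3 by lia.
apply: H => //.
- by rewrite /= eq_sym.
- exists (inr q); split => //=.
  by rewrite Hs bq; case: (g a =P q) => // E; rewrite -E /b eqxx in qb.
- exists (inl a); split => //=.
  by have E : g a = b by []; rewrite E eqxx (eq_sym b c) (negbTE cb).
- exists (inl r); split => //=.
  by rewrite Hs ar (negbTE grc).
Qed.

Lemma part1 (T : finType) (e : rel T) (g : T -> T) :
      simple_graph e -> connected_graph e -> symmetric_graph e -> 3 <= #|T| ->
      1 <= fixnum e + fixnum (functigraph e g) <= 3 * #|T| - 4.
Proof.
move=> Hsg Hc Hsym H3.
have : 0 < #|T| by lia.
case/card_gt0P => a _.
have := fixnum_allbut1 e a; have := upperF g Hsg Hc H3.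
rewrite /symmetric_graph in Hsym; lia.
Qed.


Definition Ke (m : nat) : rel 'I_m.+3 := fun x y => x != y.
Definition Kg (m : nat) : 'I_m.+3 -> 'I_m.+3 := fun _ => ord0.

Lemma Ke_simple m : simple_graph (@Ke m).
Proof. by split => [x y|x]; rewrite /Ke ?eqxx // eq_sym. Qed.

Lemma Ke_conn m : connected_graph (@Ke m).
Proof.
move=> x y; case: (eqVneq x y) => [->|h]; first exact: connect0.
by apply: connect1.
Qed.

Lemma Ke_fix m : m.+2 <= fixnum (@Ke m).
Proof.
have [Hs Hi] := Ke_simple m.
have := @lower_classes _ (@Ke m) 1 (fun _ => ord0) Hs Hi.
rewrite card_ord subn1 /=; apply => u v uv _ w wu wv.
by rewrite /Ke wu wv.
Qed.

Definition c3 (m : nat) (x : 'I_m.+3 + 'I_m.+3) : 'I_3 :=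
  match x with
  | inl _ => @Ordinal 3 0 isT
  | inr y => if y == ord0 then @Ordinal 3 1 isT else @Ordinal 3 2 isT
  end.

Lemma KF_fix m : (m.+3 + m.+3) - 3 <= fixnum (functigraph (@Ke m) (@Kg m)).
Proof.
have [Hs Hi] := Ke_simple m.
have Hs' := fg_sym (@Kg m) Hs.
have Hi' : irreflexive (functigraph (@Ke m) (@Kg m)) by move=> [x|x] /=; rewrite Hi.
have := @lower_classes _ _ 3 (@c3 m) Hs' Hi'.
rewrite card_sum card_ord; apply.
move=> [p|p] [q|q] //=.
- move=> pq _ [r|r] //= rp rq; by rewrite /Ke rp rq.
- by case: ifP.
- by case: ifP.
- move=> pq; case: (eqVneq p ord0) => [->|p0]; case: (eqVneq q ord0) => [->|q0] //.
  all: try done. move=> _ [r|r] //= rp rq; first by rewrite /Kg eq_sym (negbTE p0) eq_sym (negbTE q0).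
  by rewrite /Ke rp rq.
Qed.

Lemma part2K m : fixnum (@Ke m) + fixnum (functigraph (@Ke m) (@Kg m)) = 3 * m.+3 - 4.
Proof.
have [Hs Hi] := Ke_simple m.
have H1 := Ke_fix m; have H2 := KF_fix m.
have sym : symmetric_graph (@Ke m) by rewrite /symmetric_graph; lia.
have := part1 (@Kg m) (Ke_simple m) (@Ke_conn m) sym.
rewrite card_ord => /(_ isT) /andP [_ H3].
lia.
Qed.


Definition Pe (n : nat) : rel 'I_n := fun x y => (x.+1 == y) || (y.+1 == x).

Lemma Pe_simple n : simple_graph (@Pe n).
Proof.
split => [x y|x]; rewrite /Pe; first by rewrite orbC.
by apply/negP => /orP[] /eqP; lia.
Qed.

Lemma Pe_conn n : connected_graph (@Pe n).
Proof.
have Hs := (Pe_simple n).1.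
have H : forall k (x y : 'I_n), val y = val x + k -> connect (@Pe n) x y.
  elim => [|k IH] x y E.
    by have -> : y = x by apply: val_inj; rewrite E addn0.
  have lt : val x + k < n by have := ltn_ord y; move: E => /= E; lia.
  apply: connect_trans (IH x (Ordinal lt) erefl) _.
  by apply: connect1; rewrite /Pe /= E addnS eqxx.
move=> x y; case: (leqP x y) => h.
  by apply: (H (y - x)) => /=; lia.
by rewrite (sym_connect_sym Hs); apply: (H (x - y)) => /=; lia.
Qed.

Definition revp (n : nat) : {perm 'I_n} := perm (@rev_ord_inj n).

Lemma revp_aut n : is_autb (@Pe n) (revp n).
Proof.
apply/autP => x y; rewrite !permE /Pe /=.
have := ltn_ord x; have := ltn_ord y.
move: (nat_of_ord x) (nat_of_ord y) => a b ha hb.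
apply/idP/idP => /orP[]/eqP H; apply/orP.
all: first [left; apply/eqP; lia | right; apply/eqP; lia].
Qed.

Lemma path_rigid m (s : {perm 'I_m.+3}) : is_autb (@Pe m.+3) s -> s ord0 = ord0 -> s = 1%g.
Proof.
move=> As H0.
have H : forall i (j : 'I_m.+3), nat_of_ord j <= i -> s j = j.
  elim => [|i IH] j /= hj.
    by have -> : j = ord0 by apply: ord_inj => /=; lia.
  case: (leqP j i) => hji; first exact: IH.
  have lt : i < m.+3 by have := ltn_ord j; lia.
  have E : @Pe m.+3 (Ordinal lt) j by rewrite /Pe /= (_ : i.+1 = j) ?eqxx //; lia.
  rewrite -(autP _ _ As) IH //= in E.
  case/orP: E => /eqP /= E.
    by apply: ord_inj; transitivity i.+1; [exact: (esym E) | lia].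
  have {}E : (nat_of_ord (s j)).+1 = i by exact: E.
  by apply: perm_inj; apply: IH; lia.
apply/permP => x; rewrite perm1; apply: (H m.+2); have := ltn_ord x; lia.
Qed.

Lemma Pe_fix m : fixnum (@Pe m.+3) = 1.
Proof.
apply/eqP; rewrite eqn_leq; apply/andP; split.
  rewrite -(cards1 (@ord0 m.+2)); apply: fixnum_le; apply/fixingP => s As Fs.
  by apply: path_rigid => //; apply: Fs; rewrite inE.
apply: fixnum_ge; first by rewrite card_ord.
move=> S /fixingP FS; rewrite lt0n; apply/negP => /eqP /cards0_eq E.
have F1 : revp m.+3 = 1%g by apply: FS (revp_aut _) _ => x; rewrite E inE.
have := congr1 (fun p : {perm 'I_m.+3} => nat_of_ord (p ord0)) F1.
by rewrite /= permE perm1.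
Qed.


Definition o1 m : 'I_m.+3 := @Ordinal m.+3 1 isT.
Definition o2 m : 'I_m.+3 := @Ordinal m.+3 2 isT.
Definition Pg m (x : 'I_m.+3) : 'I_m.+3 := if x == ord0 then o1 m else ord0.

Lemma Pg_val m (x : 'I_m.+3) : nat_of_ord (Pg x) = if nat_of_ord x == 0 then 1 else 0.
Proof.
rewrite /Pg; case: (x =P ord0) => [->|h] //=.
case: eqP => // E; case: h; exact: ord_inj.
Qed.

Lemma ord0P n (x : 'I_n.+1) : (nat_of_ord x == 0) = (x == ord0).
Proof. by []. Qed.

Section Rig.
Variable m : nat.
Notation F := (functigraph (@Pe m.+3) (@Pg m)).

Lemma F_rigid (s : {perm ('I_m.+3 + 'I_m.+3)}) : is_autb F s -> s = 1%g.
Proof.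
move=> As.
pose om1 := @Ordinal m.+3 m.+1 (leqnSn m.+2).
have dz : deg F (inr ord_max) <= 1.
  have := @deg_le _ F (inr ord_max) [set inr om1]; rewrite cards1; apply.
  move=> [r|r] /=.
    by move/eqP/(congr1 (@nat_of_ord _)); rewrite Pg_val /=; case: ifP.
  rewrite /Pe /= inE => /orP[]/eqP h; have := ltn_ord r; first lia.
  move=> _; apply/eqP; congr inr; apply: ord_inj => /=; lia.
have d2 : forall v, v != inr ord_max -> 2 <= deg F v.
  move=> [x|x] hv.
    case: (eqVneq x ord0) => [->|x0].
      apply: (@deg_ge2 _ F _ (inr (o1 m)) (inl (o1 m))) => //.
    have lt : x.-1 < m.+3 by have := ltn_ord x; lia.
    apply: (@deg_ge2 _ F _ (inr (Pg x)) (inl (Ordinal lt))) => //=.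
    rewrite /Pe /=; apply/orP; right; apply/eqP.
    have : nat_of_ord x != 0 by rewrite ord0P.
    lia.
  have hx : nat_of_ord x < m.+2.
    have := ltn_ord x; move: hv; rewrite /= => hv.
    suff : nat_of_ord x != m.+2 by lia.
    exact: hv.
  have lt1 : x.+1 < m.+3 by lia.
  case: (eqVneq x ord0) => [E|x0].
    apply: (@deg_ge2 _ F _ (inr (Ordinal lt1)) (inl (o1 m))) => //=.
      by rewrite /Pe /= eqxx.
    by rewrite E.
  have lt : x.-1 < m.+3 by have := ltn_ord x; lia.
  have xn0 : nat_of_ord x != 0 by rewrite ord0P.
  apply: (@deg_ge2 _ F _ (inr (Ordinal lt1)) (inr (Ordinal lt))) => /=.
  - by rewrite /Pe /= eqxx.
  - rewrite /Pe /=; apply/orP; right; apply/eqP; lia.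
  - by change (x.+1 != x.-1); apply/eqP; lia.
have sz : s (inr ord_max) = inr ord_max.
  case: (eqVneq (s (inr ord_max)) (inr ord_max)) => // h.
  by have := d2 _ h; rewrite deg_aut //; lia.
have B : forall k, k <= m.+1 -> forall j : 'I_m.+3, m.+2 - k <= j -> s (inr j) = inr j.
  elim => [|k IH] hk j hj.
    by have -> : j = ord_max by apply: ord_inj => /=; have := ltn_ord j; lia.
  case: (leqP (m.+2 - k) j) => h; first by apply: IH => //; lia.
  have lt1 : j.+1 < m.+3 by lia.
  have f1 : s (inr (Ordinal lt1)) = inr (Ordinal lt1) by apply: IH => /=; lia.
  apply: (prop_fix As f1).
    by rewrite /= /Pe /= eqxx orbT.
  move=> [r|r] /=.
    by move/eqP/(congr1 (@nat_of_ord _)); rewrite Pg_val /=; case: ifP => _; lia.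
  rewrite /Pe /= => /orP[]/eqP hr.
    by constructor 2; apply: IH; lia.
  by constructor 1; congr inr; apply: ord_inj => /=; lia.
have Bc : forall j : 'I_m.+3, 0 < nat_of_ord j -> s (inr j) = inr j.
  by move=> j hj; apply: (B m.+1) => //; lia.
have dl0 : deg F (inl ord0) <= 2.
  have := @deg_le _ F (inl ord0) [set inl (o1 m); inr (o1 m)]; rewrite cards2.
  move=> H; apply: leq_trans (H _) _; last by case: (_ != _).
  move=> [r|r] /=; rewrite !inE.
    rewrite /Pe /= => /orP[]/eqP hr; last by [].
    by apply/orP; left; apply/eqP; congr inl; apply: ord_inj.
  by rewrite /Pg eqxx => /eqP <-; rewrite eqxx orbT.
have dr0 : 3 <= deg F (inr ord0).
  by apply: (@deg_ge3 _ F _ (inr (o1 m)) (inl (o1 m)) (inl (o2 m))).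
have f1 := Bc (o1 m) isT.
have sl0 : s (inl ord0) = inl ord0.
  apply: (prop_fix As f1); first by rewrite /= /Pg eqxx.
  move=> [r|r] /=.
    move/eqP/(congr1 (@nat_of_ord _)); rewrite Pg_val /=; case: ifP => [/eqP h _|_ //].
    by constructor 1; congr inl; apply: ord_inj.
  rewrite /Pe /= => /orP[]/eqP hr.
    by constructor 2; apply: Bc; lia.
  have -> : r = ord0 by apply: ord_inj => /=; lia.
  constructor 3; apply/eqP => E; rewrite E in dr0; by have := leq_trans dr0 dl0.
have sr0 : s (inr ord0) = inr ord0.
  apply: (prop_fix As f1); first by [].
  move=> [r|r] /=.
    move/eqP/(congr1 (@nat_of_ord _)); rewrite Pg_val /=; case: ifP => [/eqP h _|_ //].
    by constructor 2; have -> : r = ord0 by apply: ord_inj.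
  rewrite /Pe /= => /orP[]/eqP hr.
    by constructor 2; apply: Bc; lia.
  by constructor 1; congr inr; apply: ord_inj => /=; lia.
have Ball : forall j, s (inr j) = inr j.
  move=> j; case: (posnP (nat_of_ord j)) => h; last exact: Bc.
  by have -> : j = ord0 by apply: ord_inj.
have A : forall i (j : 'I_m.+3), nat_of_ord j <= i -> s (inl j) = inl j.
  elim => [|i IH] j hj.
    by have -> : j = ord0 by apply: ord_inj => /=; lia.
  case: (leqP j i) => hji; first exact: IH.
  have lt : i < m.+3 by have := ltn_ord j; lia.
  have fi : s (inl (Ordinal lt)) = inl (Ordinal lt) by apply: IH.
  apply: (prop_fix As fi).
    by rewrite /= /Pe /=; apply/orP; left; apply/eqP; lia.
  move=> [r|r] /=; last by constructor 2; apply: Ball.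
  rewrite /Pe /= => /orP[]/eqP hr.
    by constructor 1; congr inl; apply: ord_inj => /=; lia.
  by constructor 2; apply: IH; lia.
apply/permP => -[x|x]; rewrite perm1; last exact: Ball.
by apply: (A m.+2); have := ltn_ord x; lia.
Qed.
End Rig.

Theorem mainTheorem2 :
  (forall (T : finType) (e : rel T) (g : T -> T),
      simple_graph e -> connected_graph e -> symmetric_graph e -> 3 <= #|T| ->
      1 <= fixnum e + fixnum (functigraph e g) <= 3 * #|T| - 4)
  /\
  (forall n : nat, 3 <= n ->
     (exists (T : finType) (e : rel T) (g : T -> T),
        [/\ #|T| = n, simple_graph e, connected_graph e, symmetric_graph e
          & fixnum e + fixnum (functigraph e g) = 1])
     /\
     (exists (T : finType) (e : rel T) (g : T -> T),
        [/\ #|T| = n, simple_graph e, connected_graph e, symmetric_graph e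
          & fixnum e + fixnum (functigraph e g) = 3 * n - 4])).
Proof.
split; first exact: part1.
move=> n hn; have -> : n = (n - 3).+3 by lia.
move: (n - 3) => m; split.
  exists 'I_m.+3, (@Pe m.+3), (@Pg m); split.
  - exact: card_ord.
  - exact: Pe_simple.
  - exact: Pe_conn.
  - by rewrite /symmetric_graph Pe_fix.
  - rewrite Pe_fix; apply/eqP; rewrite -[1]/(1 + 0) eqn_add2l -leqn0.
    rewrite -(cards0 ('I_m.+3 + 'I_m.+3)%type); apply: fixnum_le.
    by apply/fixingP => s As _; apply: F_rigid.
exists 'I_m.+3, (@Ke m), (@Kg m); split.
- exact: card_ord.
- exact: Ke_simple.
- exact: Ke_conn.
- by rewrite /symmetric_graph => E; have := Ke_fix m; rewrite E.
- exact: part2K.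
Qed.
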